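(* Let $\Gamma\in\mathcal S$ have vertices $v_1,\dots,v_n$ and let $\varphi$ be an embedding into $\mathbb Z^n$ with no index of type (10). Then $\varphi$ has no index of type (4) if and only if $\sum_{i=1}^n d(v_i)=-3n-1$.
   Context: A plumbing tree is a finite tree $\Gamma$ each of whose vertices $v$ carries an integer decoration $d(v)$. $\Gamma$ is minimal if no vertex has decoration $-1$. For $n\ge 1$ let $(\mathbb Z^n,Q_n)$ be the lattice with basis $E_1,\dots,E_n$ and $Q_n(E_i,E_j)=-\delta_{ij}$, and let $K=\sum_{i=1}^n E_i$. A plumbing tree $\Gamma$ on $n$ vertices is a symplectic plumbing tree if there is a map $\varphi$ (an embedding) from its vertex set to $\mathbb Z^n$ such that: for distinct vertices $v_1,v_2$, $Q_n(\varphi(v_1),\varphi(v_2))$ is $1$ if they are adjacent and $0$ otherwise; $Q_n(\varphi(v),\varphi(v))=d(v)$ for every $v$; and $Q_n(\varphi(v),K)+Q_n(\varphi(v),\varphi(v))=-2$ for every $v$. $\mathcal S$ is the set of minimal, connected symplectic plumbing trees. Index types: write $\varphi(v)=\sum_i a_{v,i}E_i$; for an index $i$ consider the multiset of nonzero coefficients $a_{v,i}$ as $v$ ranges over all vertices. Index $i$ is of type (1) if this multiset is $\{1\}$, (2) if $\{-1\}$, (3) if $\{-2\}$, (4) if $\{1,-1\}$, (5) if $\{1,-2\}$, (6) if $\{-1,-1\}$, (7) if $\{1,-1,-1\}$, (9) if $\{1,-1,-1,-1\}$, and (10) if it is empty. *)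

(* Defs.v *)
From mathcomp Require Import all_boot all_order all_algebra.
Set Implicit Arguments. Unset Strict Implicit. Unset Printing Implicit Defensive.
Import Order.TTheory GRing.Theory Num.Theory.
Local Open Scope ring_scope.

(* Plumbing tree on n vertices: vertex set 'I_n, adjacency relation e, decoration d. *)

Definition simple_graph n (e : rel 'I_n) : Prop :=
  (forall v w, e v w = e w v) /\ (forall v, ~~ e v v).

Definition graph_connected n (e : rel 'I_n) : Prop :=
  forall v w, connect e v w.

Definition graph_acyclic n (e : rel 'I_n) : Prop :=
  ~ exists (x : 'I_n) (p : seq 'I_n),
      [/\ path e x p, uniq (x :: p), (2 <= size p)%N & e (last x p) x].

Definition is_tree n (e : rel 'I_n) : Prop :=
  [/\ simple_graph e, graph_connected e & graph_acyclic e].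

Definition minimal n (d : 'I_n -> int) : Prop := forall v, d v != -1.

(* lattice (Z^n, Q_n), Q_n(E_i,E_j) = - delta_ij *)
Definition Qn n (x y : 'I_n -> int) : int := - \sum_(i < n) x i * y i.
Definition Kvec n : 'I_n -> int := fun _ => 1.

(* phi v i = a_{v,i}, the i-th coefficient of phi(v) *)
Definition is_embedding n (e : rel 'I_n) (d : 'I_n -> int)
    (phi : 'I_n -> 'I_n -> int) : Prop :=
  [/\ (forall v w, v != w -> Qn (phi v) (phi w) = (if e v w then 1 else 0)),
      (forall v, Qn (phi v) (phi v) = d v) &
      (forall v, Qn (phi v) (@Kvec n) + Qn (phi v) (phi v) = -2)].

Definition symplectic n (e : rel 'I_n) (d : 'I_n -> int) : Prop :=
  exists phi, is_embedding e d phi.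

Definition in_S n (e : rel 'I_n) (d : 'I_n -> int) : Prop :=
  [/\ is_tree e, minimal d & symplectic e d].

(* multiset (as a sequence, up to permutation) of nonzero coefficients at index i *)
Definition index_coeffs n (phi : 'I_n -> 'I_n -> int) (i : 'I_n) : seq int :=
  [seq phi v i | v <- [seq v <- enum 'I_n | phi v i != 0]].

Definition index_type10 n (phi : 'I_n -> 'I_n -> int) (i : 'I_n) : bool :=
  index_coeffs phi i == [::].

Definition index_type4 n (phi : 'I_n -> 'I_n -> int) (i : 'I_n) : bool :=
  perm_eq (index_coeffs phi i) [:: 1; -1].

(* Main.v *)
Require Import Defs.
From mathcomp Require Import all_boot all_order all_algebra.
From mathcomp Require Import zify ring lra.
Import Order.TTheory GRing.Theory Num.Theory.
Local Open Scope ring_scope.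
Set Implicit Arguments. Unset Strict Implicit. Unset Printing Implicit Defensive.

Definition Ed n (e : rel 'I_n) (v w : 'I_n) : int := if e v w then 1 else 0.

Lemma dotE n (e : rel 'I_n) d phi (H : is_embedding e d phi) (v w : 'I_n) :
  \sum_i phi v i * phi w i = if v == w then - d v else - Ed e v w.
Proof.
case: H => H1 H2 _.
have -> : \sum_i phi v i * phi w i = - Qn (phi v) (phi w) by rewrite /Qn opprK.
case: eqP => [<-|/eqP vw]; first by rewrite H2.
by rewrite H1 // /Ed.
Qed.

Lemma linE n (e : rel 'I_n) d phi (H : is_embedding e d phi) (v : 'I_n) :
  \sum_i phi v i = d v + 2.
Proof.
case: H => _ H2 H3.
have := H3 v; rewrite H2 /Qn /Kvec.
under eq_bigr do rewrite mulr1.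
move=> h; lra.
Qed.

Lemma vertE n (e : rel 'I_n) d phi (H : is_embedding e d phi) (v : 'I_n) :
  \sum_i phi v i * (phi v i + 1) = 2.
Proof.
under eq_bigr do rewrite mulrDr mulr1.
rewrite big_split /= (dotE H) eqxx (linE H); lia.
Qed.

Lemma sq_ge0 (x : int) : 0 <= x * (x + 1).
Proof. nia. Qed.

Lemma single_le n (F : 'I_n -> int) i : (forall j, 0 <= F j) -> F i <= \sum_j F j.
Proof.
move=> h; rewrite (bigD1 i) //= lerDl; exact: sumr_ge0.
Qed.

Lemma pair_le n (F : 'I_n -> int) i j : i != j -> (forall k, 0 <= F k) ->
  F i + F j <= \sum_k F k.
Proof.
move=> ij h; rewrite (bigD1 i) //= (bigD1 j) /=; last by rewrite eq_sym.
rewrite addrA lerDl; exact: sumr_ge0.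
Qed.

Lemma entryE n (e : rel 'I_n) d phi (H : is_embedding e d phi) v i :
  -2 <= phi v i <= 1.
Proof.
have := single_le i (fun j => sq_ge0 (phi v j)); rewrite (vertE H).
move=> h; apply/andP; split; nia.
Qed.

Lemma pairE n (e : rel 'I_n) d phi (H : is_embedding e d phi) v w : v != w ->
  \sum_i (phi v i + phi w i) * (phi v i + phi w i + 1) = 4 - 2 * Ed e v w.
Proof.
move=> vw.
have -> : \sum_i (phi v i + phi w i) * (phi v i + phi w i + 1) =
   \sum_i phi v i * (phi v i + 1) + \sum_i phi w i * (phi w i + 1)
   + 2 * \sum_i phi v i * phi w i.
  rewrite mulr_sumr -!big_split /=; apply: eq_bigr => i _; ring.
by rewrite !(vertE H) (dotE H) (negbTE vw); ring.
Qed.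

Lemma Ed_ge0 n (e : rel 'I_n) v w : 0 <= Ed e v w.
Proof. by rewrite /Ed; case: (e v w). Qed.

Lemma no_two n (e : rel 'I_n) d phi (H : is_embedding e d phi) v w i c :
  v != w -> (c = 1 \/ c = -2) -> phi v i = c -> phi w i = c -> False.
Proof.
move=> vw hc hv hw.
have := single_le i (fun j => sq_ge0 (phi v j + phi w j)).
rewrite (pairE H vw) hv hw.
have := @Ed_ge0 _ e v w.
case: hc => -> h1 h2; lia.
Qed.


Definition good3 (x : int) : bool := (x == 1) || (x == -1) || (x == -2).

Lemma count_dec (L : seq int) (p : pred int) : all good3 L ->
  count p L = (p 1%R * count (pred1 1%R) L + p (-1)%R * count (pred1 (-1)%R) L
               + p (-2)%R * count (pred1 (-2)%R) L)%N.
Proof.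
elim: L => [|x L IH]; first by rewrite /= !muln0.
move=> /= /andP [gx aL]; rewrite IH //.
by case/orP: gx => [/orP [] | ] /eqP ->; rewrite /= ?eqxx /=; lia.
Qed.

Lemma sum_dec (L : seq int) : all good3 L ->
  \sum_(x <- L) x = (count (pred1 1%R) L)%:Z - (count (pred1 (-1)%R) L)%:Z
                     - 2 * (count (pred1 (-2)%R) L)%:Z.
Proof.
elim: L => [|x L IH]; first by rewrite big_nil.
rewrite /= big_cons => /andP [gx aL]; rewrite IH //.
by case/orP: gx => [/orP [] | ] /eqP ->; rewrite /= ?eqxx /=; lia.
Qed.

Lemma colzero (L : seq int) : all good3 L -> (count (pred1 1%R) L <= 1)%N ->
  (count (pred1 (-2)%R) L <= 1)%N -> \sum_(x <- L) x = 0 ->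
  L = [::] \/ perm_eq L [:: 1; -1].
Proof.
move=> aL c1 c3; rewrite sum_dec // => hs.
have hsz := count_dec predT aL; rewrite count_predT /= in hsz.
have hc : forall p : pred int, count p L = (p 1%R * count (pred1 1%R) L + p (-1)%R * count (pred1 (-1)%R) L
               + p (-2)%R * count (pred1 (-2)%R) L)%N by move=> p; apply: count_dec.
move: hs hsz c1 c3 hc; move: (count (pred1 1%R) L) (count (pred1 (-1)%R) L) (count (pred1 (-2)%R) L) => a b c.
move=> hs hsz c1 c3 hc.
have c0 : c = 0%N by lia.
have ab : a = b by lia.
subst c b.
case: a hs hsz c1 hc => [|[|//]] hs hsz _ hc.
  by left; apply/eqP; rewrite -size_eq0; apply/eqP; rewrite hsz.
by right; apply/permP => p; rewrite hc /= !muln1 muln0 !addn0.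
Qed.

Lemma colone (L : seq int) : all good3 L -> (count (pred1 1%R) L <= 1)%N ->
  (count (pred1 (-2)%R) L <= 1)%N -> \sum_(x <- L) x = 1 -> 1 \in L.
Proof.
move=> aL c1 c3; rewrite sum_dec // => hs.
rewrite -has_pred1 has_count; lia.
Qed.

Lemma count_le1 (T : eqType) (s : seq T) (q : pred T) : uniq s ->
  (forall x y, x \in s -> y \in s -> q x -> q y -> x = y) -> (count q s <= 1)%N.
Proof.
elim: s => [|a s IH] //= /andP [as_ us] h.
case qa: (q a) => /=.
  rewrite -[X in (_ <= X)%N]addn0 leq_add2l leqNgt -has_count.
  apply/hasP => -[y ys qy].
  have ya := h y a; rewrite inE ys orbT inE eqxx in ya.
  by move: as_; rewrite -(ya isT isT qy qa) ys.
apply: IH => // x y xs ys; apply: h; by rewrite inE ?xs ?ys orbT.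
Qed.

Lemma ic_sum n (phi : 'I_n -> 'I_n -> int) i :
  \sum_(x <- index_coeffs phi i) x = \sum_v phi v i.
Proof.
rewrite /index_coeffs big_map big_filter big_enum_cond /=.
rewrite [RHS](bigID (fun v => phi v i != 0)) /= [X in _ + X]big1 ?addr0 //.
by move=> v /negbNE /eqP.
Qed.

Lemma ic_good n (e : rel 'I_n) d phi (H : is_embedding e d phi) i :
  all good3 (index_coeffs phi i).
Proof.
apply/allP => x /mapP [v]; rewrite mem_filter => /andP [nz _] ->.
have := entryE H v i; rewrite /good3; move: nz; move: (phi v i) => a.
move=> nz h; lia.
Qed.

Lemma ic_count n (e : rel 'I_n) d phi (H : is_embedding e d phi) i c :
  (c = 1 \/ c = -2) -> (count (pred1 c) (index_coeffs phi i) <= 1)%N.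
Proof.
move=> hc; rewrite /index_coeffs count_map.
apply: count_le1; first by rewrite filter_uniq // enum_uniq.
move=> x y _ _ /= /eqP hx /eqP hy.
apply/eqP; apply/negPn/negP => xy; exact: (no_two H xy hc hx hy).
Qed.


Definition fA n (e : rel 'I_n) (A : {set 'I_n}) : int :=
  \sum_(v in A) \sum_(w in A) Ed e v w.

Lemma sum_in_ge1 n (A : {set 'I_n}) (F : 'I_n -> int) a :
  a \in A -> (forall j, 0 <= F j) -> F a <= \sum_(j in A) F j.
Proof. move=> aA h; rewrite (bigD1 a) //= lerDl; exact: sumr_ge0. Qed.

Lemma fA_grow n (e : rel 'I_n) (A : {set 'I_n}) a b :
  a \in A -> b \notin A -> e a b -> (forall v w, e v w = e w v) ->
  fA e A + 2 <= fA e (b |: A).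
Proof.
move=> aA bA eab sym; rewrite /fA big_setU1 //=.
under [X in _ <= _ + X]eq_bigr => v _ do rewrite big_setU1 //=.
rewrite big_setU1 //= big_split /=.
have h1 : 1 <= \sum_(w in A) Ed e b w.
  have := @sum_in_ge1 _ A (fun w => Ed e b w) a aA (fun w => @Ed_ge0 _ e b w); by rewrite /Ed sym eab.
have h2 : 1 <= \sum_(v in A) Ed e v b.
  have := @sum_in_ge1 _ A (fun v => Ed e v b) a aA (fun v => @Ed_ge0 _ e v b); by rewrite /Ed eab.
have h3 := @Ed_ge0 _ e b b.
lra.
Qed.

Lemma deg_sum_ge n (e : rel 'I_n) : (0 < n)%N -> simple_graph e ->
  graph_connected e -> 2 * (n%:Z - 1) <= \sum_v \sum_w Ed e v w.
Proof.
move=> hn [sym irr] conn.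
have key : forall k, (k < n)%N -> exists A : {set 'I_n}, #|A| = k.+1 /\ 2 * k%:Z <= fA e A.
  elim=> [|k IH] hk.
    exists [set Ordinal hn]; rewrite cards1 /fA !big_set1 /Ed (negbTE (irr _)); split=> //.
  have [A [cA fAk]] := IH (ltnW hk).
  case: (pickP [pred ab : 'I_n * 'I_n | (ab.1 \in A) && (ab.2 \notin A) && e ab.1 ab.2]).
    case=> a b /= /andP [/andP [aA bA] eab].
    exists (b |: A); split; first by rewrite cardsU1 bA cA.
    have := fA_grow aA bA eab sym; lra.
  move=> none.
  have [a0 a0A] : exists a0, a0 \in A.
    by apply/set0Pn; rewrite -card_gt0 cA.
  have cl : closed e A.
    move=> x y exy.
    case xA: (x \in A); case yA: (y \in A) => //.
      by have := none (x, y); rewrite /= xA yA exy.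
    by have := none (y, x); rewrite /= xA yA sym exy.
  have : (#|[set: 'I_n]| <= #|A|)%N.
    apply: subset_leq_card; apply/subsetP => v _.
    by rewrite -(closed_connect cl (conn a0 v)).
  by rewrite cardsT card_ord cA; lia.
have [A [cA fAk]] := key n.-1 ltac:(lia).
have AT : A = [set: 'I_n].
  apply/eqP; rewrite eqEcard subsetT cardsT card_ord cA; lia.
move: fAk; rewrite /fA AT.
have -> : (n.-1)%:Z = n%:Z - 1 by lia.
move=> h; apply: (le_trans h); rewrite le_eqVlt; apply/orP; left; apply/eqP.
apply: eq_big => [v|v _]; first by rewrite in_setT.
by apply: eq_bigl => w; rewrite in_setT.
Qed.

Lemma cycle_exists n (e : rel 'I_n) : (0 < n)%N -> simple_graph e ->
  (forall v u, exists y, e v y && (y != u)) -> ~ graph_acyclic e.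
Proof.
move=> hn [sym irr] H Hac.
have key : forall k, exists x p, [/\ path e x p, uniq (x :: p) & size p = k].
  elim=> [|k [x [p [pp up sp]]]].
    by exists (Ordinal hn), [::].
  have [y /andP [exy yu]] := H x (head x p).
  case yin: (y \in x :: p); last first.
    exists y, (x :: p); split.
    - by rewrite /= sym exy.
    - by rewrite cons_uniq yin up.
    - by rewrite /= sp.
  have yx : y != x by apply/eqP => yx; move: exy; rewrite yx (negbTE (irr x)).
  move: yin; rewrite inE (negbTE yx) /= => yp.
  set j := index y p.
  have jp : (j < size p)%N by rewrite index_mem.
  have j0 : j != 0%N.
    apply/eqP => j0; move: yu; rewrite -nth0 -j0 /j nth_index //.
    by rewrite eqxx.
  exfalso; apply: Hac; exists x, (take j.+1 p); split.
  - exact: take_path.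
  - exact: (take_uniq j.+2 up).
  - rewrite size_takel //; lia.
  - by rewrite (take_nth x jp) last_rcons nth_index // sym.
have [x [p [_ up sp]]] := key n.
have := max_card (mem (x :: p)).
rewrite (card_uniqP up) card_ord /= sp; lia.
Qed.


Lemma sum_const_int n (c : int) : \sum_(i < n) c = c * n%:Z.
Proof. by rewrite sumr_const card_ord -mulr_natr natz. Qed.

Definition wv n (phi : 'I_n -> 'I_n -> int) (i : 'I_n) : int := \sum_v phi v i.
Definition degv n (e : rel 'I_n) (v : 'I_n) : int := \sum_w Ed e v w.

Lemma degid n (e : rel 'I_n) d phi (H : is_embedding e d phi) :
  simple_graph e -> forall v, \sum_i wv phi i * phi v i = - d v - degv e v.
Proof.
move=> [sym irr] v.
rewrite /wv; under eq_bigr do rewrite mulr_suml.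
rewrite exchange_big /=.
under eq_bigr do rewrite (dotE H).
rewrite (bigD1 v) //= eqxx /degv [\sum_(w < n) Ed e v w](bigD1 v) //=.
rewrite {2}/Ed (negbTE (irr v)) add0r -sumrN; congr (_ + _).
by apply: eq_bigr => w wv; rewrite (negbTE wv) /Ed sym.
Qed.

Lemma sumw n (e : rel 'I_n) d phi (H : is_embedding e d phi) :
  \sum_i wv phi i = \sum_v d v + 2 * n%:Z.
Proof.
rewrite /wv exchange_big /=; under eq_bigr do rewrite (linE H).
by rewrite big_split /= sum_const_int mulrC.
Qed.

Lemma sumt n (e : rel 'I_n) d phi (H : is_embedding e d phi) : simple_graph e ->
  \sum_i wv phi i * (wv phi i + 1) = 2 * n%:Z - \sum_v degv e v.
Proof.
move=> sg.
under eq_bigr do rewrite mulrDr mulr1.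
rewrite big_split /= (sumw H).
have -> : \sum_i wv phi i * wv phi i = \sum_v (- d v - degv e v).
  rewrite -(eq_bigr _ (fun v _ => degid H sg v)) exchange_big /=.
  by apply: eq_bigr => i _; rewrite {1}/wv mulr_suml; apply: eq_bigr => v _; rewrite mulrC.
rewrite big_split /= !sumrN; ring.
Qed.

Unset Implicit Arguments.

Theorem mainTheorem13 (n : nat) (e : rel 'I_n) (d : 'I_n -> int)
    (phi : 'I_n -> 'I_n -> int) :
  (0 < n)%N ->
  in_S e d ->
  is_embedding e d phi ->
  (forall i : 'I_n, ~~ index_type10 phi i) ->
  ((forall i : 'I_n, ~~ index_type4 phi i) <->
   \sum_(v < n) d v = - (3 * n%:Z) - 1).
Proof.
move=> hn [[sg conn acyc] minl _] H no10.
have Dge := deg_sum_ge hn sg conn.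
have ST := sumt H sg.
have SW := sumw H.
have tle : \sum_i wv phi i * (wv phi i + 1) <= 2.
  rewrite ST; rewrite /degv in Dge *; lra.
have tge : forall i, 0 <= wv phi i * (wv phi i + 1) by move=> i; exact: sq_ge0.
have ti : forall i, wv phi i * (wv phi i + 1) <= 2.
  by move=> i; apply: le_trans tle; exact: single_le.
split.
- move=> no4.
  have wne0 : forall i, wv phi i != 0.
    move=> i; apply/eqP => w0.
    have := colzero (ic_good H i) (ic_count H i (or_introl erefl))
      (ic_count H i (or_intror erefl)).
    rewrite ic_sum -/(wv phi i) w0 => /(_ erefl) [].
      by move/eqP; have := no10 i; rewrite /index_type10 => /negP.
    by have := no4 i; rewrite /index_type4 => /negP.
  have wval : forall i, [\/ wv phi i = -2, wv phi i = -1 | wv phi i = 1].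
    move=> i; have := ti i; have := wne0 i; have := tge i.
    move: (wv phi i) => x h1 h2 h3.
    have : (-2 <= x <= 1) by apply/andP; split; nia.
    case/andP => l u.
    have : x = -2 \/ x = -1 \/ x = 0 \/ x = 1 by lia.
    case=> [->|[->|[x0|->]]]; [by constructor|by constructor| |by constructor].
    by rewrite x0 eqxx in h2.
  have no1 : forall i0, wv phi i0 != 1.
    move=> i0; apply/eqP => w1.
    have others : forall j, j != i0 -> wv phi j = -1.
      move=> j ji; have := pair_le ji tge; rewrite w1 => h.
      by case: (wval j) => hj; rewrite hj in h *; lra.
    have [u hu] : exists u, phi u i0 = 1.
      have := colone (ic_good H i0) (ic_count H i0 (or_introl erefl))
        (ic_count H i0 (or_intror erefl)).
      rewrite ic_sum -/(wv phi i0) w1 => /(_ erefl) /mapP [u _ hu].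
      by exists u; rewrite hu.
    have du0 : degv e u = 0.
      have := degid H sg u.
      have -> : \sum_i wv phi i * phi u i = 2 * phi u i0 - \sum_i phi u i.
        rewrite (bigD1 i0) //= [\sum_i phi u i](bigD1 i0) //= w1.
        rewrite (eq_bigr (fun i => - phi u i)); last first.
          by move=> i ii; rewrite others // mulN1r.
        rewrite sumrN; ring.
      rewrite (linE H) hu; lra.
    have [j ji] : exists j, j != i0.
      case: (pickP [pred j | j != i0]) => [j jj|none]; first by exists j.
      exfalso; have := dotE H u u; rewrite eqxx (bigD1 i0) //= big1; last first.
        by move=> i ii; have := none i; rewrite /= ii.
      rewrite hu addr0 => h; have := minl u; rewrite /minimal.
      have -> : d u = -1 by lra.
      by rewrite eqxx.
    pose v := if i0 == u then j else i0.
    have vu : v != u.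
      rewrite /v; case: (i0 =P u) => [iu|/eqP iu] //; by rewrite -iu.
    case/connectP: (conn u v) => p; case: p => [|y p'] /=.
      by move=> _ vu'; rewrite vu' eqxx in vu.
    move=> /andP [euy _] _.
    have := single_le y (fun w => @Ed_ge0 _ e u w).
    rewrite -/(degv e u) du0 /Ed euy; lra.
  case: (pickP [pred i | wv phi i == -2]) => [i0 /eqP w2 | none].
    have t2 : \sum_i wv phi i * (wv phi i + 1) = 2.
      have := single_le i0 tge; rewrite w2; lra.
    have z : \sum_i (2 * wv phi i + 2 + wv phi i * (wv phi i + 1)) = 0.
      rewrite big1 // => i _.
      case: (wval i) => h; rewrite h; [lra|lra|by have := no1 i; rewrite h eqxx].
    rewrite !big_split /= -mulr_sumr sum_const_int t2 SW in z; lra.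
  exfalso.
  have wm1 : forall i, wv phi i = -1.
    move=> i; case: (wval i) => // h.
      by have := none i; rewrite /= h eqxx.
    by have := no1 i; rewrite h eqxx.
  have deg2 : forall v, degv e v = 2.
    move=> v; have := degid H sg v.
    rewrite (eq_bigr (fun i => - phi v i)); last by move=> i _; rewrite wm1 mulN1r.
    rewrite sumrN (linE H); lra.
  have H' : forall v u, exists y, e v y && (y != u).
    move=> v u.
    case: (pickP [pred y | e v y && (y != u)]) => [y hy|none2]; first by exists y.
    exfalso; have := deg2 v; rewrite /degv (bigD1 u) //= big1; last first.
      move=> w wu; have := none2 w; rewrite /= wu andbT /Ed => ->; by [].
    by rewrite /Ed; case: (e v u).
  exact: (cycle_exists hn sg H' acyc).
- move=> hS i; apply/negP => t4.
  have w0 : wv phi i = 0.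
    by rewrite /wv -ic_sum (perm_big _ t4) !big_cons big_nil.
  have hge : forall j, 0 <= (wv phi j + 1) * (wv phi j + 2).
    move=> j; have := sq_ge0 (wv phi j + 1); rewrite -addrA; exact.
  have := single_le i hge; rewrite w0.
  have -> : \sum_j (wv phi j + 1) * (wv phi j + 2) =
     \sum_j wv phi j * (wv phi j + 1) + 2 * \sum_j wv phi j + 2 * n%:Z.
    rewrite mulr_sumr -sum_const_int -!big_split /=.
    by apply: eq_bigr => j _; ring.
  rewrite SW hS; lra.
Qed.
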